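(* Let $n=n_1+n_2+n_3=m_1+m_2+m_3$ be partitions of $n$ into positive integers, let $G=U(n)$, let $L=U(n_1)\times U(n_2)\times U(n_3)$ and $H=U(m_1)\times U(m_2)\times U(m_3)$ be the natural block-diagonal subgroups of $G$, and let $G'=O(n)$. Then $LG'H\subsetneq G$.
   Context: $LG'H=\{xyz:x\in L,y\in G',z\in H\}$. *)

(* Defs.v *)
From HB Require Import structures.
From mathcomp Require Import all_boot all_order all_algebra.
From mathcomp Require Import complex.
From mathcomp Require Import Rstruct.
Set Implicit Arguments. Unset Strict Implicit. Unset Printing Implicit Defensive.
Import Order.TTheory GRing.Theory Num.Theory.
Local Open Scope ring_scope.

Definition CC : numClosedFieldType := (Rdefinitions.R)[i].

Definition adjmx n (A : 'M[CC]_n) : 'M[CC]_n := (map_mx Num.conj A)^T.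

Definition unitaryC n (A : 'M[CC]_n) : bool := A *m adjmx A == 1%:M.

Definition orthoR n (A : 'M[CC]_n) : bool :=
  [forall i, forall j, A i j \is Num.real] && (A *m A^T == 1%:M).

Definition blk (k1 k2 i : nat) : nat :=
  if (i < k1)%N then 0%N else if (i < k1 + k2)%N then 1%N else 2%N.

(* The natural block-diagonal subgroup U(k1) x U(k2) x U(k3) of U(n),
   where n = k1 + k2 + k3 (k3 is determined by n). *)
Definition blockU n (k1 k2 : nat) (A : 'M[CC]_n) : bool :=
  unitaryC A &&
  [forall i : 'I_n, forall j : 'I_n,
     (blk k1 k2 i != blk k1 k2 j) ==> (A i j == 0)].

(* Main.v *)
Require Import Defs.
From HB Require Import structures.
From mathcomp Require Import all_boot all_order all_algebra complex Rstruct.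
From mathcomp Require Import sesquilinear spectral.
From mathcomp Require Import perm fingroup.
From mathcomp Require Import ring lra zify.
Set Implicit Arguments. Unset Strict Implicit. Unset Printing Implicit Defensive.
Import Order.TTheory GRing.Theory Num.Theory.
Local Open Scope ring_scope.

Section General.
Local Open Scope sesquilinear_scope.
Variable n : nat.
Implicit Types A B x y z : 'M[CC]_n.

Lemma adjmxE A : adjmx A = A ^t*.
Proof. by rewrite /adjmx map_trmx. Qed.

Lemma unitaryCE A : unitaryC A = (A \is unitarymx).
Proof. by rewrite /unitaryC adjmxE. Qed.

Lemma orthoR_adj y : orthoR y -> y ^t* = y^T.
Proof.
case/andP=> /forallP hr _; apply/matrixP=> i j; rewrite !mxE.
by apply: conj_Creal; move/forallP: (hr j) => /(_ i).
Qed.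

Lemma orthoR_unitary y : orthoR y -> y \is unitarymx.
Proof.
move=> hy; rewrite qualifE orthoR_adj //; by case/andP: hy.
Qed.

Lemma blockU_unitary k1 k2 x : blockU k1 k2 x -> x \is unitarymx.
Proof. by case/andP; rewrite unitaryCE. Qed.

Definition bmx k1 k2 A := forall i j : 'I_n, blk k1 k2 i != blk k1 k2 j -> A i j = 0.

Lemma blockU_bmx k1 k2 x : blockU k1 k2 x -> bmx k1 k2 x.
Proof.
case/andP=> _ /forallP h i j ne; move/forallP: (h i) => /(_ j) /implyP /(_ ne).
by move/eqP.
Qed.

Lemma bmx_adj k1 k2 x : bmx k1 k2 x -> bmx k1 k2 (x ^t*).
Proof. by move=> h i j ne; rewrite !mxE h ?rmorph0 // eq_sym. Qed.

Definition proj k1 k2 (c : nat) : 'M[CC]_n :=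
  diag_mx (\row_(i < n) ((blk k1 k2 i == c)%:R : CC)).

Lemma proj_comm k1 k2 c x : bmx k1 k2 x -> proj k1 k2 c *m x = x *m proj k1 k2 c.
Proof.
move=> h; apply/matrixP => i j; rewrite /proj mul_diag_mx mul_mx_diag !mxE.
case: (eqVneq (blk k1 k2 i) (blk k1 k2 j)) => [->|ne]; first by rewrite mulrC.
by rewrite h // mulr0 mul0r.
Qed.

Lemma commA m (A : 'M[CC]_(m, n)) B C : B *m C = C *m B -> A *m B *m C = A *m C *m B.
Proof. by move=> h; rewrite -!mulmxA h. Qed.

Definition Fm k1 k2 l1 l2 c g := proj k1 k2 c *m g *m proj l1 l2 c *m g ^t*.

Lemma Fm_mul k1 k2 l1 l2 c x y z :
  x \is unitarymx -> bmx k1 k2 x -> z \is unitarymx -> bmx l1 l2 z ->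
  Fm k1 k2 l1 l2 c (x *m y *m z) = x *m Fm k1 k2 l1 l2 c y *m x ^t*.
Proof.
move=> ux bx uz bz; rewrite /Fm !trmx_mul !map_mxM !mulmxA (proj_comm _ bx).
rewrite (commA _ (esym (proj_comm c bz))) (mulmxtVK _ uz).
by [].
Qed.

Lemma adj_mul_unitary x : x \is unitarymx -> x ^t* *m x = 1%:M.
Proof. by move=> ux; rewrite -[x ^t*]mul1mx (mulmxKtV _ ux). Qed.

Lemma trace_conj x A B : x \is unitarymx ->
  \tr (x *m A *m x ^t* *m (x *m B *m x ^t*)) = \tr (A *m B).
Proof.
move=> ux; rewrite !mulmxA (mulmxKtV _ ux) //.
rewrite mxtrace_mulC !mulmxA adj_mul_unitary // mul1mx.
by [].
Qed.

Definition tinv k1 k2 l1 l2 g := \tr (Fm k1 k2 l1 l2 0 g *m Fm k1 k2 l1 l2 1 g).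

Lemma tinv_mul k1 k2 l1 l2 x y z :
  x \is unitarymx -> bmx k1 k2 x -> z \is unitarymx -> bmx l1 l2 z ->
  tinv k1 k2 l1 l2 (x *m y *m z) = tinv k1 k2 l1 l2 y.
Proof.
by move=> ux bx uz bz; rewrite /tinv (Fm_mul 0 y ux bx uz bz) (Fm_mul 1 y ux bx uz bz) trace_conj.
Qed.

Lemma real_proj k1 k2 c : proj k1 k2 c \is a mxOver Num.real.
Proof.
apply/mxOverP => i j; rewrite !mxE.
by apply: rpredMn; apply: realn.
Qed.

Lemma tinv_real k1 k2 l1 l2 y : orthoR y -> tinv k1 k2 l1 l2 y \is Num.real.
Proof.
move=> hy.
have ry : y \is a mxOver Num.real.
  by apply/mxOverP => i j; case/andP: hy => /forallP /(_ i) /forallP /(_ j).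
have ry' : y ^t* \is a mxOver Num.real.
  rewrite orthoR_adj //; apply/mxOverP => i j; rewrite mxE.
  by move/mxOverP: ry; apply.
have rF c : Fm k1 k2 l1 l2 c y \is a mxOver Num.real.
  rewrite /Fm; apply: mxOverM; last exact: ry'.
  apply: mxOverM; last exact: real_proj.
  by apply: mxOverM; [exact: real_proj | exact: ry].
rewrite /tinv /mxtrace; apply: rpred_sum => i _.
by move/mxOverP: (mxOverM (rF 0%N) (rF 1%N)); apply.
Qed.

Lemma tinvE k1 k2 l1 l2 g : tinv k1 k2 l1 l2 g =
  \sum_(i < n) \sum_(k < n) \sum_(j < n) \sum_(l < n)
    (((blk k1 k2 i == 0%N)%:R * g i j * (blk l1 l2 j == 0%N)%:R * Num.conj (g k j)) *
     ((blk k1 k2 k == 1%N)%:R * g k l * (blk l1 l2 l == 1%N)%:R * Num.conj (g i l))).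
Proof.
rewrite /tinv /mxtrace; apply: eq_bigr => i _; rewrite mxE; apply: eq_bigr => k _.
rewrite /Fm /proj !mul_diag_mx !mul_mx_diag !mxE mulr_suml; apply: eq_bigr => j _.
rewrite mulr_sumr; apply: eq_bigr => l _; rewrite !mxE.
by [].
Qed.

End General.

Section Helpers2.
Local Notation R := Rdefinitions.R.
Local Open Scope sesquilinear_scope.

Definition cq (a b : R) : CC := Complex (a/3) (b/3).

Definition w (r s : nat) : CC :=
  match r, s with
  | 0, 0 => cq 2 1 | 0, 1 => cq 1 1 | 0, _ => cq 1 1
  | 1, 0 => cq 1 1 | 1, 1 => cq 1 (-1) | 1, _ => cq (-2) (-1)
  | _, 0 => cq 1 1 | _, 1 => cq (-2) (-1) | _, _ => cq 1 (-1)
  end.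

Lemma w_orth r s : (r < 3)%N -> (s < 3)%N ->
  w r 0 * Num.conj (w s 0) + w r 1 * Num.conj (w s 1) + w r 2 * Num.conj (w s 2)
  = (r == s)%:R.
Proof.
case: r => [|[|[|//]]] _; case: s => [|[|[|//]]] _ /=;
  rewrite /cq /=; simpc; apply/eqP; rewrite eq_complex /=;
  apply/andP; split; apply/eqP; field => //.
Qed.

Lemma w_nonreal :
  w 0 0 * Num.conj (w 1 0) * (w 1 1 * Num.conj (w 0 1)) \is Num.real -> False.
Proof.
rewrite /= /cq /=; simpc; rewrite realE !lecE /=.
by case/orP => /andP [/eqP H _]; lra.
Qed.

Lemma sum4_collapse (m : nat) (F : 'I_m -> 'I_m -> 'I_m -> 'I_m -> CC) i0 k0 j0 l0 :
  (forall i k j l, F i k j l != 0 -> [/\ i = i0, k = k0, j = j0 & l = l0]) ->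
  \sum_i \sum_k \sum_j \sum_l F i k j l = F i0 k0 j0 l0.
Proof.
move=> h.
have z i k j l : ~ [/\ i = i0, k = k0, j = j0 & l = l0] -> F i k j l = 0.
  by move=> nh; apply/eqP; apply: contraT => /h.
have s1 (f : 'I_m -> CC) x0 : (forall x, x != x0 -> f x = 0) -> \sum_x f x = f x0.
  by move=> hf; rewrite (bigD1 x0) //= big1 ?addr0 // => x /hf.
rewrite (s1 _ i0) => [|i ne]; last first.
  apply: big1 => k _; apply: big1 => j _; apply: big1 => l _; apply: z => -[e].
  by move: ne; rewrite e eqxx.
rewrite (s1 _ k0) => [|k ne]; last first.
  apply: big1 => j _; apply: big1 => l _; apply: z => -[_ e].
  by move: ne; rewrite e eqxx.
rewrite (s1 _ j0) => [|j ne]; last first.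
  apply: big1 => l _; apply: z => -[_ _ e].
  by move: ne; rewrite e eqxx.
rewrite (s1 _ l0) // => l ne; apply: z => -[_ _ _ e].
by move: ne; rewrite e eqxx.
Qed.

Lemma natb_neq0 (b : bool) : ((b%:R : CC) != 0) -> b.
Proof. by case: b => //; rewrite eqxx. Qed.

Lemma blk0 k1 k2 i : blk k1 k2 i == 0%N -> (i < k1)%N.
Proof. by rewrite /blk; case: ifP => //; case: ifP. Qed.

Lemma blk1 k1 k2 i : blk k1 k2 i == 1%N -> (k1 <= i < k1 + k2)%N.
Proof. by rewrite /blk; case: ltnP => h1 //; case: ltnP => h2 // _; rewrite h1 h2. Qed.

Lemma perm_unitary m (p : 'S_m) : (perm_mx p : 'M[CC]_m) \is unitarymx.
Proof.
apply/unitarymxP.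
have -> : (perm_mx p : 'M[CC]_m) ^t* = (perm_mx p)^T.
  by apply/matrixP => i j; rewrite !mxE rmorphMn rmorph1.
by rewrite tr_perm_mx -perm_mxM mulgV perm_mx1.
Qed.

Section Concrete.
Variables (n n1 n2 m1 m2 : nat).
Hypotheses (hn1 : (0 < n1)%N) (hn2 : (0 < n2)%N) (hnn : (n1 + n2 < n)%N)
  (hm1 : (0 < m1)%N) (hm2 : (0 < m2)%N) (hmm : (m1 + m2 < n)%N).

Definition inT (i : nat) : bool := [|| i == 0, i == n1 | i == n.-1]%N.
Definition code (i : nat) : nat := if (i == 0)%N then 0%N else if (i == n1)%N then 1%N else 2%N.

Fact E_key : unit. Proof. by []. Qed.
Definition E : 'M[CC]_n := locked_with E_key
  (\matrix_(i, x) if inT i && inT x then w (code i) (code x) else (i == x)%:R).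

Lemma Eentry i x : E i x = if inT i && inT x then w (code i) (code x) else (i == x)%:R.
Proof. by rewrite /E unlock mxE. Qed.

Lemma lt_a : (0 < n)%N. Proof. lia. Qed.
Lemma lt_b : (n1 < n)%N. Proof. lia. Qed.
Lemma lt_c : (n.-1 < n)%N. Proof. lia. Qed.
Lemma lt_q : (m1 < n)%N. Proof. lia. Qed.
Definition oa := Ordinal lt_a.
Definition ob := Ordinal lt_b.
Definition oc := Ordinal lt_c.
Definition oq := Ordinal lt_q.

Lemma inT_cases (i : 'I_n) : inT i -> [\/ i = oa, i = ob | i = oc].
Proof.
by case/or3P => /eqP h; [apply: Or31 | apply: Or32 | apply: Or33]; apply: val_inj.
Qed.

Lemma inTa : inT oa. Proof. by []. Qed.
Lemma inTb : inT ob. Proof. by rewrite /inT /= eqxx orbT. Qed.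
Lemma inTc : inT oc. Proof. by rewrite /inT /= eqxx !orbT. Qed.
Lemma code_a : code oa = 0%N. Proof. by []. Qed.
Lemma code_b : code ob = 1%N.
Proof. have h : (n1 == 0)%N = false by apply/eqP; lia. by rewrite /code /= h eqxx. Qed.
Lemma code_c : code oc = 2%N.
Proof.
have h : (n.-1 == 0)%N = false by apply/eqP; lia.
have h' : (n.-1 == n1)%N = false by apply/eqP; lia.
by rewrite /code /= h h'.
Qed.
Lemma ab : oa != ob. Proof. apply/eqP => /(congr1 val) /=; lia. Qed.
Lemma ac : oa != oc. Proof. apply/eqP => /(congr1 val) /=; lia. Qed.
Lemma bc : ob != oc. Proof. apply/eqP => /(congr1 val) /=; lia. Qed.

Lemma sum_delta (f : 'I_n -> CC) i : \sum_x (i == x)%:R * f x = f i.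
Proof.
rewrite (bigD1 i) //= eqxx mul1r big1 ?addr0 // => x ne.
by rewrite eq_sym (negbTE ne) mul0r.
Qed.

Lemma sum_delta_r (f : 'I_n -> CC) k : \sum_x f x * Num.conj ((k == x)%:R) = f k.
Proof.
rewrite (bigD1 k) //= eqxx rmorph1 mulr1 big1 ?addr0 // => x ne.
by rewrite eq_sym (negbTE ne) rmorph0 mulr0.
Qed.

Lemma E_unitary : E \is unitarymx.
Proof.
rewrite qualifE; apply/eqP/matrixP => i k; rewrite !mxE.
under eq_bigr => x _ do rewrite !mxE.
case iT: (inT i); last first.
  under eq_bigr => x _ do rewrite [E i x]Eentry iT /=.
  rewrite sum_delta Eentry iT andbF rmorph_nat.
  by rewrite eq_sym.
case kT: (inT k); last first.
  under eq_bigr => x _ do rewrite [E k x]Eentry kT /=.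
  rewrite sum_delta_r Eentry iT kT /=.
  by [].
have zero (x : 'I_n) : ~~ inT x -> E i x = 0.
  move=> xT; rewrite Eentry (negbTE xT) andbF.
  by case: eqP => // ex; move: xT; rewrite -ex iT.
rewrite (bigD1 oa) //= (bigD1 ob) /=; last by rewrite eq_sym ab.
rewrite (bigD1 oc) /=; last by rewrite eq_sym ac eq_sym bc.
rewrite big1 ?addr0; last first.
  move=> x /andP [/andP [xa xb] xc].
  rewrite zero ?mul0r //; apply/negP => /inT_cases [] /eqP; by apply/negP.
rewrite !Eentry iT kT inTa inTb inTc /= code_a code_b code_c addrA.
have ci : (code i < 3)%N by rewrite /code; case: ifP => //; case: ifP.
have ck : (code k < 3)%N by rewrite /code; case: ifP => //; case: ifP.
rewrite w_orth //.
congr (_ %:R); congr nat_of_bool.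
case/inT_cases: iT => ->; case/inT_cases: kT => ->;
  rewrite ?code_a ?code_b ?code_c ?eqxx //; apply/esym/negbTE;
  by rewrite ?ab ?ac ?bc // eq_sym ?ab ?ac ?bc.
Qed.

Definition sw : 'S_n := tperm ob oq.
Definition g := col_perm sw E.

Lemma g_unitary : g \is unitarymx.
Proof. by rewrite /g col_permE mul_unitarymx ?E_unitary ?perm_unitary. Qed.

Lemma E_nz i x : E i x != 0 -> (inT i && inT x) || (i == x).
Proof.
rewrite Eentry; case: ifP => [//|_].
by case: (i == x) => //; rewrite eqxx.
Qed.

Lemma sw_facts (x : 'I_n) :
  (x = n1 :> nat /\ sw x = m1 :> nat) \/ (x = m1 :> nat /\ sw x = n1 :> nat) \/
  (x <> n1 :> nat /\ x <> m1 :> nat /\ sw x = x :> nat).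
Proof.
rewrite /sw; case: tpermP => [->|->|nb nq]; [by left | by right; left | right; right].
split; first by move=> e; apply: nb; apply: val_inj.
split; first by move=> e; apply: nq; apply: val_inj.
by [].
Qed.

Lemma inT_nat (y : nat) : inT y -> y = 0%N \/ y = n1 \/ y = n.-1.
Proof. by case/or3P => /eqP ->; [left | right; left | right; right]. Qed.

Lemma tinv_val :
  tinv n1 n2 m1 m2 g = w 0 0 * Num.conj (w 1 0) * (w 1 1 * Num.conj (w 0 1)).
Proof.
rewrite tinvE (sum4_collapse (i0 := oa) (k0 := ob) (j0 := oa) (l0 := oq)); last first.
  move=> i k j l; rewrite !mulf_eq0 !negb_or.
  move=> /andP [/andP [/andP [/andP [d0i gij] e0j] cgkj] /andP [/andP [/andP [d1k gkl] e1l] cgil]].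
  rewrite conjC_eq0 in cgkj cgil.
  move: gij gkl cgkj cgil; rewrite /g !mxE ?conjC_eq0 => /E_nz gij /E_nz gkl /E_nz gkj /E_nz gil.
  have hi := blk0 (natb_neq0 d0i); have hj := blk0 (natb_neq0 e0j).
  have /andP [hk1 hk2] := blk1 (natb_neq0 d1k); have /andP [hl1 hl2] := blk1 (natb_neq0 e1l).
  have iT : inT i.
    apply: contraT => niT; move: gij gil; rewrite (negbTE niT) /= => /eqP e1 /eqP e2.
    have : j = l by apply: (@perm_inj _ sw); rewrite -e1 -e2.
    by move/(congr1 val) => /= ejl; lia.
  have kT : inT k.
    apply: contraT => nkT; move: gkj gkl; rewrite (negbTE nkT) /= => /eqP e1 /eqP e2.
    have : j = l by apply: (@perm_inj _ sw); rewrite -e1 -e2.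
    by move/(congr1 val) => /= ejl; lia.
  have sjT : inT (sw j) by case/orP: gij => [/andP [] //|/eqP <-].
  have slT : inT (sw l) by case/orP: gkl => [/andP [] //|/eqP <-].
  have := inT_nat iT; have := inT_nat kT; have := inT_nat sjT; have := inT_nat slT.
  have := sw_facts j; have := sw_facts l.
  move=> fl fj fsl fsj fk fi.
  have ei : (i : nat) = 0%N by clear -fi hi hnn hn2; lia.
  have ek : (k : nat) = n1 by clear -fk hk1 hk2 hnn hn2; lia.
  have ej : (j : nat) = 0%N by clear -fj fsj hj hmm hm1 hm2 hnn hn1 hn2; lia.
  have el : (l : nat) = m1 by clear -fl fsl hl1 hl2 hmm hm1 hm2 hnn hn1 hn2; lia.
  by split; apply: val_inj.
rewrite /g !mxE.
have b00 : blk n1 n2 0 = 0%N by rewrite /blk hn1.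
have b01 : blk n1 n2 n1 = 1%N by rewrite /blk ltnn; have -> : (n1 < n1 + n2)%N by lia.
have b10 : blk m1 m2 0 = 0%N by rewrite /blk hm1.
have b11 : blk m1 m2 m1 = 1%N by rewrite /blk ltnn; have -> : (m1 < m1 + m2)%N by lia.
have sa : sw oa = oa.
  rewrite /sw tpermD // ?ab //; apply/eqP => /(congr1 val) /=; lia.
have sq : sw oq = ob by rewrite /sw tpermR.
rewrite /= b00 b01 b10 b11 sa sq /= !mul1r !mulr1 !Eentry inTa inTb /= code_a code_b.
by [].
Qed.

Lemma concrete_strict : exists g0 : 'M[CC]_n, unitaryC g0 /\
  ~ (exists x y z : 'M[CC]_n,
       [/\ blockU n1 n2 x, orthoR y, blockU m1 m2 z & g0 = x *m y *m z]).
Proof.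
exists g; split; first by rewrite unitaryCE g_unitary.
case=> x [y [z [hx hy hz e]]]; apply: w_nonreal.
rewrite -tinv_val e (tinv_mul _ (blockU_unitary hx) (blockU_bmx hx) (blockU_unitary hz) (blockU_bmx hz)).
exact: tinv_real.
Qed.

End Concrete.

End Helpers2.

Theorem proposition6p4 (n n1 n2 n3 m1 m2 m3 : nat)
  (hn1 : (0 < n1)%N) (hn2 : (0 < n2)%N) (hn3 : (0 < n3)%N)
  (hm1 : (0 < m1)%N) (hm2 : (0 < m2)%N) (hm3 : (0 < m3)%N)
  (hn : n = (n1 + n2 + n3)%N) (hm : n = (m1 + m2 + m3)%N) :
  (* L G' H is contained in G = U(n) ... *)
  (forall x y z : 'M[CC]_n,
      blockU n1 n2 x -> orthoR y -> blockU m1 m2 z ->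
      unitaryC (x *m y *m z))
  /\
  (* ... and the inclusion is strict. *)
  (exists g : 'M[CC]_n,
      unitaryC g /\
      ~ (exists x y z : 'M[CC]_n,
           [/\ blockU n1 n2 x, orthoR y, blockU m1 m2 z
             & g = x *m y *m z])).

Proof.
split.
  move=> x y z hx hy hz; rewrite unitaryCE.
  apply: mul_unitarymx; first apply: mul_unitarymx.
  - exact: blockU_unitary hx.
  - exact: orthoR_unitary.
  - exact: blockU_unitary hz.
apply: (concrete_strict (n2 := n2) (m2 := m2)); lia.
Qed.
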